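(* Let $X$ be an irreducible continuous-time Markov jump process on a finite state space $K$ with transition rates $k(x,y;\beta)\geq 0$ ($x\neq y$) depending on a real parameter $\beta$, such that $k(x,y;\beta)>0$ iff $k(y,x;\beta)>0$, that this set of pairs does not depend on $\beta>0$, and that for every such pair the limit $\phi(x,y)=\lim_{\beta\to\infty}\frac1\beta\log k(x,y;\beta)$ exists (finite). Let $\mathcal{A}$ be the union of all attractors of $K$. Then for every $y\in K$ there exists $x\in\mathcal{A}$ with $\mathcal{U}(y,x)=0$.
   Context: Make $K$ into a graph with an edge $x\sim y$ iff $x\neq y$ and $k(x,y;\beta)>0$. Define $\Gamma(x)=-\max_{y\sim x}\phi(x,y)$ and, for $x\sim y$, $U(x,y)=-\phi(x,y)-\Gamma(x)\geq 0$; set $U(x,x)=+\infty$. A state $y$ with $U(x,y)=0$ is a preferred successor of $x$. A path $D=(x_0,x_1,\dots,x_n)$ is a sequence with $x_{m}\sim x_{m+1}$, and $U(D)=\sum_{m=0}^{n-1}U(x_m,x_{m+1})$. For $x,y\in K$, $\mathcal{U}(x,y)=\min_D U(D)$ over all paths $D$ from $x$ to $y$. A non-empty set $A\subset K$ is an attractor if $\mathcal{U}(x,y)=0$ for all $x\neq y\in A$ and $\mathcal{U}(x,y)>0$ for all $x\in A$, $y\in K\setminus A$. *)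

(* Defs.v *)
From HB Require Import structures.
From mathcomp Require Import all_boot all_order all_algebra.
From mathcomp Require Import all_classical all_reals all_analysis.
Set Implicit Arguments. Unset Strict Implicit. Unset Printing Implicit Defensive.
Import Order.TTheory GRing.Theory Num.Theory.
Local Open Scope ring_scope.
Local Open Scope classical_set_scope.

Section Metastab.
Variables (R : realType) (K : finType).
(* transition rates: k b x y = k(x,y;beta=b) *)
Variable k : R -> K -> K -> R.
Variable phi : K -> K -> R.

Definition edge_at (b : R) : rel K := fun x y => (x != y) && (0 < k b x y).

(* the graph on K: by the beta-independence hypothesis we may evaluate at beta = 1 *)
Definition edge : rel K := edge_at 1.

(* Gamma(x) = - max_{y ~ x} phi(x,y)  (0 if x has no neighbour: never used) *)
Definition Gamma (x : K) : R :=
  - (if [pick y | edge x y] is Some y0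
     then \big[Num.max/phi x y0]_(y | edge x y) phi x y else 0).

Definition Ucost (x y : K) : R := - phi x y - Gamma x.

Fixpoint path_cost (x : K) (s : seq K) : R :=
  if s is y :: s' then Ucost x y + path_cost y s' else 0.

(* calU(x,y) = min over paths D from x to y of U(D) (taken as the infimum) *)
Definition calU (x y : K) : R :=
  inf [set path_cost x s | s in [set s : seq K | path edge x s /\ last x s = y]].

Definition attractor (A : {set K}) : Prop :=
  (exists x, x \in A) /\
  (forall x y, x \in A -> y \in A -> x != y -> calU x y = 0) /\
  (forall x y, x \in A -> y \notin A -> 0 < calU x y).

Definition attractor_union : {set K} :=
  \bigcup_(A : {set K} | `[< attractor A >]) A.

End Metastab.

(* Main.v *)
Require Import Defs.
From HB Require Import structures.
From mathcomp Require Import all_boot all_order all_algebra.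
From mathcomp Require Import all_classical all_reals all_analysis.
Import Order.TTheory GRing.Theory Num.Theory.
Import numFieldNormedType.Exports.
Local Open Scope ring_scope.
Local Open Scope classical_set_scope.

Section Aux.
Variables (R : realType) (K : finType) (k : R -> K -> K -> R) (phi : K -> K -> R).

Lemma le_bigmax_mem (I : eqType) (r : seq I) (P : pred I) (F : I -> R) i0 y :
  y \in r -> P y -> F y <= \big[Num.max/i0]_(j <- r | P j) F j.
Proof.
elim: r => // a r IH; rewrite inE big_cons => /orP[/eqP-> Py|yr Py].
  by rewrite Py le_max lexx.
case: ifP => _; last exact: IH.
by rewrite le_max (IH yr Py) orbT.
Qed.

Lemma bigmin_le_mem (I : eqType) (r : seq I) (P : pred I) (F : I -> R) i0 y :
  y \in r -> P y -> \big[Num.min/i0]_(j <- r | P j) F j <= F y.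
Proof.
elim: r => // a r IH; rewrite inE big_cons => /orP[/eqP-> Py|yr Py].
  by rewrite Py ge_min lexx.
case: ifP => _; last exact: IH.
by rewrite ge_min (IH yr Py) orbT.
Qed.

Notation U := (Ucost k phi).
Notation E := (edge k).

Lemma Ucost_ge0 x y : E x y -> 0 <= U x y.
Proof.
move=> exy; rewrite /Ucost /Gamma opprK.
case: pickP => [y0 _|/(_ y)]; last by rewrite exy.
rewrite addrC subr_ge0.
exact: (@le_bigmax_mem _ (index_enum K) (fun j => E x j) (phi x) (phi x y0) y (mem_index_enum y) exy).
Qed.

Lemma path_cost_ge0 x s : path E x s -> 0 <= path_cost k phi x s.
Proof.
elim: s x => //= a s IH x /andP[exa ps].
by rewrite addr_ge0 // ?Ucost_ge0 // IH.
Qed.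

Definition zrel : rel K := fun x y => E x y && (U x y == 0).

Lemma zpath_cost x s : path zrel x s -> path_cost k phi x s = 0.
Proof.
elim: s x => //= a s IH x /andP[/andP[_ /eqP->] ps].
by rewrite IH // addr0.
Qed.

Definition mpos : R :=
  \big[Num.min/1]_(p : K * K | E p.1 p.2 && (0 < U p.1 p.2)) U p.1 p.2.

Lemma mpos_gt0 : 0 < mpos.
Proof.
rewrite /mpos; elim/big_ind: _ => //.
  by move=> a b a0 b0; rewrite lt_min a0 b0.
by move=> p /andP[].
Qed.

Lemma mpos_le x y : E x y -> 0 < U x y -> mpos <= U x y.
Proof.
move=> exy upos.
apply: (@bigmin_le_mem _ (index_enum _) (fun p : K * K => E p.1 p.2 && (0 < U p.1 p.2))
  (fun p : K * K => U p.1 p.2) 1 (x, y) (mem_index_enum _)) => /=; by rewrite ?exy ?upos.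
Qed.

Lemma calU_zero x y : connect zrel x y -> calU k phi x y = 0.
Proof.
move=> /connectP[s ps ys].
have pe : path E x s by apply: sub_path ps => a b /andP[].
have lb : lbound [set path_cost k phi x s | s in
    [set s : seq K | path E x s /\ last x s = y]] 0.
  by move=> r [t [pt _] <-]; exact: path_cost_ge0.
have Sr : [set path_cost k phi x s | s in
    [set s : seq K | path E x s /\ last x s = y]] 0.
  by exists s; [split=> // | exact: zpath_cost].
apply/eqP; rewrite eq_le; apply/andP; split.
  by apply: (ge_inf (ex_intro _ 0 lb)).
by apply: lb_le_inf => //; exists 0.
Qed.

Lemma cost_ge_mpos x s y : path E x s -> last x s = y -> ~~ connect zrel x y ->
  mpos <= path_cost k phi x s.
Proof.
elim: s x => [|a s IH] x /=.
  by move=> _ <-; rewrite connect0.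
move=> /andP[exa ps] ly nc.
have [u0|u0] := eqVneq (U x a) 0.
  rewrite u0 add0r; apply: IH => //; apply: contra nc => ca.
  by apply: connect_trans ca; apply: connect1; rewrite /zrel exa u0 eqxx.
have upos : 0 < U x a by rewrite lt_neqAle eq_sym u0 Ucost_ge0.
rewrite -[mpos]addr0; apply: lerD; first exact: mpos_le.
exact: path_cost_ge0.
Qed.

Lemma calU_pos x y : connect E x y -> ~~ connect zrel x y -> 0 < calU k phi x y.
Proof.
move=> /connectP[s ps ys] nc.
apply: (lt_le_trans mpos_gt0); apply: lb_le_inf.
  by exists (path_cost k phi x s), s => //; split => //; rewrite ys.
move=> r [t [pt lt] <-]. have H := @cost_ge_mpos x t y pt lt nc. exact H.
Qed.
End Aux.
Arguments zrel {R K}. Arguments calU_zero {R K}. Arguments calU_pos {R K}.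

Theorem proposition2 (R : realType) (K : finType) (k : R -> K -> K -> R)
  (phi : K -> K -> R)
  (k_nonneg : forall (b : R) x y, x != y -> 0 <= k b x y)
  (k_sym : forall (b : R) x y, 0 < b -> x != y -> (0 < k b x y <-> 0 < k b y x))
  (k_indep : forall (b b' : R) x y, 0 < b -> 0 < b' -> x != y ->
     (0 < k b x y <-> 0 < k b' x y))
  (k_irred : forall b : R, 0 < b -> forall x y, connect (edge_at k b) x y)
  (phi_lim : forall x y, edge k x y ->
     ln (k b x y) / b @[b --> +oo%R] --> phi x y) :
  forall y : K, exists x : K,
    x \in attractor_union k phi /\ calU k phi y x = 0.
Proof.
move=> y.
pose z := zrel k phi.
pose reach x := [set w | connect z x w]%SET.
case: (@arg_minnP _ y (connect z y) (fun x => #|reach x|) (connect0 _ _)).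
move=> x yx xmin.
have term w : connect z x w -> connect z w x.
  move=> xw.
  have sub : reach w \subset reach x.
    by apply/fintype.subsetP => v; rewrite !inE => wv; apply: connect_trans xw wv.
  have yw : connect z y w by apply: connect_trans yx xw.
  have := xmin w yw => le.
  have /eqP eq : reach w == reach x by rewrite eqEcard sub le.
  have : x \in reach x by rewrite inE connect0.
  by rewrite -eq inE.
pose A := reach x.
have attA : attractor k phi A.
  split; first by exists x; rewrite inE connect0.
  split.
    move=> x1 x2; rewrite !inE => x1A x2A _.
    apply: calU_zero; apply: connect_trans (term _ x1A) x2A.
  move=> x1 x2; rewrite !inE => x1A x2A.
  apply: calU_pos; first exact: (k_irred 1 ltr01).
  apply: contra x2A => c; apply: connect_trans x1A c.
exists x; split; last exact: calU_zero.
apply/bigcupP; exists A; first by apply/asboolP.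
by rewrite inE connect0.
Qed.
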